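(* Let $(M,d)$ be a metric space, let $X\subseteq M$ with $|X|=t$, let $h$ be an integer with $1\le h\le t$, and let $Y\subseteq M$ be a nonempty finite set. Then there exists a subset $S\subseteq Y$ such that (A) $|S|\le t/h$, and (B) for every $y\in Y$, $d_S(y,1)\le 2\,d_X(y,h)$.
   Context: For a finite set $S\subseteq M$, a point $p\in M$ and an integer $1\le i\le|S|$, $d_S(p,i)$ denotes the radius of the smallest closed ball centered at $p$ containing at least $i$ points of $S$; in particular $d_S(p,1)$ is the distance from $p$ to the nearest point of $S$. *)

(* Defs.v *)
From Stdlib Require Import Reals List Classical ClassicalEpsilon.
Open Scope R_scope.

Definition is_metric {M : Type} (d : M -> M -> R) : Prop :=
  (forall x y, 0 <= d x y) /\
  (forall x y, d x y = 0 <-> x = y) /\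
  (forall x y, d x y = d y x) /\
  (forall x y z, d x z <= d x y + d y z).

(* Finite subsets of M are represented by duplicate-free lists. *)

Definition ball_count {M : Type} (d : M -> M -> R) (S : list M) (p : M) (r : R) : nat :=
  length (filter (fun s => if Rle_dec (d p s) r then true else false) S).

Definition is_dS_radius {M : Type} (d : M -> M -> R) (S : list M) (p : M) (i : nat) (r : R) : Prop :=
  (i <= ball_count d S p r)%nat /\
  (forall r', (i <= ball_count d S p r')%nat -> r <= r').

(* d_S(p,i): the radius of the smallest closed ball centred at p
   containing at least i points of S (well defined for 1 <= i <= |S|). *)
Definition dS {M : Type} (d : M -> M -> R) (S : list M) (p : M) (i : nat) : R :=
  epsilon (inhabits 0) (is_dS_radius d S p i).

(* Main.v *)
Require Import Defs.
From Stdlib Require Import Reals List.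
From Stdlib Require Import Lra Lia Classical ClassicalEpsilon.
Open Scope R_scope.

Section Aux.
Variable M : Type.

Lemma filter_len_mono (f g : M -> bool) (l : list M) :
  (forall x, In x l -> f x = true -> g x = true) ->
  (length (filter f l) <= length (filter g l))%nat.
Proof.
  induction l as [|a l IH]; simpl; intros H; auto.
  destruct (f a) eqn:Ef.
  - rewrite (H a (or_introl eq_refl) Ef); simpl.
    apply le_n_S, IH; auto.
  - destruct (g a); simpl; [apply le_S|]; apply IH; auto.
Qed.

Lemma filter_len_all (f : M -> bool) (l : list M) :
  (forall x, In x l -> f x = true) -> length (filter f l) = length l.
Proof.
  induction l as [|a l IH]; simpl; intros H; auto.
  rewrite (H a (or_introl eq_refl)); simpl; f_equal; auto.
Qed.

Lemma filter_len_lt (f : M -> bool) (l : list M) y :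
  In y l -> f y = false -> (length (filter f l) < length l)%nat.
Proof.
  induction l as [|a l IH]; simpl; intros Hi Hf; [contradiction|].
  destruct Hi as [<-|Hi].
  - rewrite Hf. pose proof (filter_len_mono f (fun _ => true) l).
    rewrite (filter_len_all (fun _ => true) l) in H by auto.
    assert (length (filter f l) <= length l)%nat by (apply H; auto). lia.
  - destruct (f a); simpl; specialize (IH Hi Hf); lia.
Qed.

Lemma filter_nonempty (f : M -> bool) (l : list M) :
  (0 < length (filter f l))%nat -> exists x, In x l /\ f x = true.
Proof.
  induction l as [|a l IH]; simpl; intros H; [lia|].
  destruct (f a) eqn:E; [exists a; auto|].
  destruct (IH H) as [x [? ?]]; exists x; auto.
Qed.

Lemma list_min (f : M -> R) (L : list M) :
  L <> nil -> exists y, In y L /\ forall z, In z L -> f y <= f z.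
Proof.
  induction L as [|a L IH]; intros H; [congruence|].
  destruct L as [|b L'].
  - exists a; split; [left; auto|]; intros z [<-|[]]; lra.
  - destruct IH as [y [Hy Hm]]; [discriminate|].
    destruct (Rle_dec (f a) (f y)).
    + exists a; split; [left; auto|]. intros z [<-|Hz]; [lra|].
      specialize (Hm z Hz); lra.
    + exists y; split; [right; auto|]. intros z [<-|Hz]; [lra|]; auto.
Qed.

Lemma list_max (f : M -> R) (L : list M) :
  L <> nil -> exists y, In y L /\ forall z, In z L -> f z <= f y.
Proof.
  intros H. destruct (list_min (fun x => - f x) L H) as [y [Hy Hm]].
  exists y; split; auto. intros z Hz; specialize (Hm z Hz); lra.
Qed.

Variable d : M -> M -> R.

Lemma dS_exists (S : list M) p (i : nat) :
  (1 <= i)%nat -> (i <= length S)%nat -> exists r, is_dS_radius d S p i r.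
Proof.
  intros Hi1 HiS.
  assert (HSne : S <> nil) by (intro E; subst; simpl in HiS; lia).
  set (L := filter (fun s => Nat.leb i (ball_count d S p (d p s))) S).
  assert (HLne : L <> nil).
  { destruct (list_max (fun s => d p s) S HSne) as [m [Hm Hmax]].
    assert (In m L).
    { apply filter_In; split; auto. apply Nat.leb_le.
      unfold ball_count. rewrite filter_len_all; auto.
      intros x Hx; destruct Rle_dec; auto; exfalso; apply n; auto. }
    intro E; rewrite E in H; contradiction. }
  destruct (list_min (fun s => d p s) L HLne) as [s0 [Hs0 Hmin]].
  apply filter_In in Hs0 as [Hs0S Hs0c]. apply Nat.leb_le in Hs0c.
  exists (d p s0); split; auto.
  intros r' Hr'.
  assert (Hpos : (0 < length (filter (fun s => if Rle_dec (d p s) r' then true else false) S))%nat)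
    by (unfold ball_count in Hr'; lia).
  assert (Fne : filter (fun s => if Rle_dec (d p s) r' then true else false) S <> nil).
  { intro E; rewrite E in Hpos; simpl in Hpos; lia. }
  destruct (list_max (fun s => d p s) _ Fne) as [s1 [Hs1 Hmax1]].
  apply filter_In in Hs1 as [Hs1S Hs1r]. destruct Rle_dec as [Hle|]; [|discriminate].
  assert (In s1 L).
  { apply filter_In; split; auto. apply Nat.leb_le.
    eapply Nat.le_trans; [apply Hr'|]. unfold ball_count.
    apply filter_len_mono. intros x Hx Hf.
    assert (In x (filter (fun s => if Rle_dec (d p s) r' then true else false) S))
      by (apply filter_In; auto).
    specialize (Hmax1 x H). destruct (Rle_dec (d p x) (d p s1)); auto. }
  specialize (Hmin s1 H). lra.
Qed.

Lemma dS_spec (S : list M) p (i : nat) :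
  (1 <= i)%nat -> (i <= length S)%nat -> is_dS_radius d S p i (dS d S p i).
Proof.
  intros H1 H2. unfold dS. apply epsilon_spec. apply dS_exists; auto.
Qed.

Variable r : M -> R.

Fixpoint Sep (S : list M) : Prop :=
  match S with
  | nil => True
  | s :: S' => (forall s', In s' S' -> r s + r s' < d s s') /\ Sep S'
  end.

Hypothesis Hdm : is_metric d.
Hypothesis Hr0 : forall y, 0 <= r y.

Lemma greedy : forall n (Z : list M), (length Z <= n)%nat -> NoDup Z ->
  exists S, (Z <> nil -> S <> nil) /\ NoDup S /\ incl S Z /\ Sep S /\
    forall z, In z Z -> exists s, In s S /\ d z s <= 2 * r z.
Proof.
  destruct Hdm as [Hd0 [Hdeq [Hsym Htri]]].
  induction n as [|n IH]; intros Z HZ Hnd.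
  - destruct Z; [|simpl in HZ; lia].
    exists nil; split; [auto|split; [constructor|split; [intros a []|split; [exact I|intros z []]]]].
  - destruct Z as [|z0 Z0].
    + exists nil; split; [auto|split; [constructor|split; [intros a []|split; [exact I|intros z []]]]].
    + destruct (list_min r (z0 :: Z0) ltac:(discriminate)) as [y [Hy Hmin]].
      set (f := fun z => if Rle_dec (d y z) (r y + r z) then false else true).
      set (Z' := filter f (z0 :: Z0)).
      assert (Hfy : f y = false).
      { unfold f. destruct Rle_dec; auto. exfalso; apply n0.
        assert (d y y = 0) by (apply Hdeq; auto). pose proof (Hr0 y). lra. }
      assert (Hlen : (length Z' <= n)%nat).
      { pose proof (filter_len_lt f _ y Hy Hfy) as Hl. unfold Z'.
        change (length (z0 :: Z0)) with (S (length Z0)) in Hl, HZ. lia. }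
      destruct (IH Z' Hlen (NoDup_filter f Hnd)) as [S' [_ [HndS [Hinc [Hsep Hcov]]]]].
      exists (y :: S'); repeat split.
      * discriminate.
      * constructor; auto. intro Hin. apply Hinc in Hin.
        unfold Z' in Hin. apply filter_In in Hin. destruct Hin; congruence.
      * intros a [<-|Ha]; auto. apply Hinc in Ha. unfold Z' in Ha.
        apply filter_In in Ha; tauto.
      * intros s' Hs'. apply Hinc in Hs'. unfold Z' in Hs'. apply filter_In in Hs' as [_ Hf].
        unfold f in Hf. destruct Rle_dec; [discriminate|]. lra.
      * auto.
      * intros z Hz. destruct (Rle_dec (d y z) (r y + r z)) as [Hle|Hnle].
        -- exists y; split; [left; auto|]. rewrite Hsym. specialize (Hmin z Hz). lra.
        -- assert (In z Z').
           { unfold Z'; apply filter_In; split; auto. unfold f; destruct Rle_dec; auto; contradiction. }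
           destruct (Hcov z H) as [s [Hs Hd]]. exists s; split; [right|]; auto.
Qed.

Definition ind (x s : M) : nat := if Rle_dec (d s x) (r s) then 1%nat else 0%nat.

Fixpoint ind_sum (x : M) (S : list M) : nat :=
  match S with nil => 0%nat | s :: S' => (ind x s + ind_sum x S')%nat end.

Fixpoint sumc (X S : list M) : nat :=
  match S with nil => 0%nat | s :: S' => (ball_count d X s (r s) + sumc X S')%nat end.

Lemma sumc_cons x X S : sumc (x :: X) S = (ind_sum x S + sumc X S)%nat.
Proof.
  induction S as [|s S IH]; simpl; auto. rewrite IH.
  unfold ball_count, ind; simpl. destruct Rle_dec; simpl; lia.
Qed.

Lemma ind_sum_zero x S : (forall s, In s S -> r s < d s x) -> ind_sum x S = 0%nat.
Proof.
  induction S as [|s S IH]; simpl; intros H; auto.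
  unfold ind. destruct Rle_dec as [Hl|]; [specialize (H s (or_introl eq_refl)); lra|].
  rewrite IH; auto.
Qed.

Lemma ind_sum_le1 x S : Sep S -> (ind_sum x S <= 1)%nat.
Proof.
  destruct Hdm as [Hd0 [Hdeq [Hsym Htri]]].
  induction S as [|s S IH]; simpl; intros H; [lia|]. destruct H as [Hs HS].
  unfold ind. destruct Rle_dec as [Hl|Hn].
  - rewrite ind_sum_zero; [lia|]. intros s' Hs'.
    destruct (Rlt_le_dec (r s') (d s' x)) as [|Hc]; auto.
    specialize (Hs s' Hs'). specialize (Htri s x s'). rewrite (Hsym x s') in Htri. lra.
  - specialize (IH HS); lia.
Qed.

Lemma sumc_le X S : Sep S -> (sumc X S <= length X)%nat.
Proof.
  intros H. induction X as [|x X IH].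
  - clear H. induction S as [|s S IHS]; simpl; auto.
  - rewrite sumc_cons. pose proof (ind_sum_le1 x S H). simpl; lia.
Qed.

End Aux.

Theorem mainTheorem4 (M : Type) (d : M -> M -> R) (Hd : is_metric d)
  (X : list M) (t : nat) (HX : NoDup X) (HXt : length X = t)
  (h : nat) (Hh1 : (1 <= h)%nat) (Hht : (h <= t)%nat)
  (Y : list M) (HY : NoDup Y) (HYne : Y <> nil) :
  exists S : list M,
    S <> nil /\ NoDup S /\ incl S Y /\
    INR (length S) <= INR t / INR h /\
    (forall y, In y Y -> dS d S y 1 <= 2 * dS d X y h).
Proof.
  set (r := fun y => dS d X y h).
  assert (Hcnt : forall y, (h <= ball_count d X y (r y))%nat).
  { intro y. apply (dS_spec M d X y h Hh1); lia. }
  assert (Hr0 : forall y, 0 <= r y).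
  { intro y. specialize (Hcnt y). unfold ball_count in Hcnt.
    destruct (filter_nonempty M (fun s => if Rle_dec (d y s) (r y) then true else false) X ltac:(lia)) as [x [_ Hx]].
    destruct Rle_dec; [|discriminate]. destruct Hd as [Hd0 _]. specialize (Hd0 y x). lra. }
  destruct (greedy M d r Hd Hr0 (length Y) Y (le_n _) HY) as [S [Hne [HndS [Hinc [Hsep Hcov]]]]].
  exists S; repeat split; auto.
  - assert (Hm : (length S * h <= sumc M d r X S)%nat).
    { clear -Hcnt. induction S as [|s S IH]; simpl; [lia|]. specialize (Hcnt s). lia. }
    pose proof (sumc_le M d r Hd X S Hsep).
    assert (Hh : 0 < INR h) by (apply lt_0_INR; lia).
    apply (Rmult_le_reg_r (INR h)); auto.
    unfold Rdiv. rewrite Rmult_assoc, Rinv_l by lra. rewrite Rmult_1_r, <- mult_INR.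
    apply le_INR. lia.
  - intros y Hy. destruct (Hcov y Hy) as [s [Hs Hds]].
    assert (HS1 : (1 <= length S)%nat) by (destruct S; [contradiction|simpl; lia]).
    destruct (dS_spec M d S y 1 (le_n 1) HS1) as [_ Hmin].
    assert (dS d S y 1 <= d y s).
    { apply Hmin. unfold ball_count.
      assert (In s (filter (fun s0 => if Rle_dec (d y s0) (d y s) then true else false) S)).
      { apply filter_In; split; auto. destruct Rle_dec; auto. exfalso; apply n; lra. }
      destruct (filter _ S); [contradiction|simpl; lia]. }
    unfold r in Hds. lra.
Qed.
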